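(* Let $k$ be a field of characteristic $\neq2$, let $f\in k[X]$ be separable of degree $6$ with set of roots $\Omega\subset\bar k$, let $l=k(\Omega)$, let $A=k[X]/(f)$, and let $\delta\in A^*$. Let $k'\subseteq\bar k$ be an extension of $k$ containing $l$, and write $A_{k'}=A\otimes_kk'$. For $\omega\in\Omega$ let $\mu_\omega\in A_{k'}$ be the element with $\varphi_\theta(\mu_\omega)=-1$ if $\theta=\omega$ and $\varphi_\theta(\mu_\omega)=1$ otherwise, where $\varphi_\theta:A_{k'}\to k'$ is $X\mapsto\theta$. For $\varepsilon\in A_{k'}$ with $\varepsilon^2=\delta$, let $L_\varepsilon\subset\mathbb{P}(A_{k'})$ be the line corresponding to the subspace $\{\varepsilon^{-1}(sX+t): s,t\in k'\}$; it lies on $V_{f,\delta}$. Let $P_{\varepsilon,\omega}\in L_\varepsilon$ be the point corresponding to $\{s\varepsilon^{-1}(X-\omega): s\in k'\}$. For $\mu\in A_{k'}^*$ let $[\mu]$ denote the automorphism of $\mathbb{P}(A_{k'})$ induced by multiplication by $\mu$. Then: (i) $[\mu_\omega]P_{\varepsilon,\omega}=P_{\varepsilon,\omega}$ for all $\omega\in\Omega$ and all such $\varepsilon$. (ii) For $\varepsilon,\varepsilon'\in A_{k'}$ with $\varepsilon^2=\varepsilon'^2=\delta$, put $L=L_\varepsilon$ and $L'=L_{\varepsilon'}$. The lines $L$ and $L'$ intersect if and only if there exists $\omega\in\Omega$ with $[\mu_\omega]L=L'$. In that case the intersection point is $P_{\varepsilon,\omega}=P_{\varepsilon',\omega}$.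
   Context: $V_{f,\delta}\subset\mathbb{P}(A)$ is the set of classes of nonzero $q$ with $\delta q^2$ in the span of $1,X,X^2$. *)

(* Defs.v *)
From mathcomp Require Import all_boot all_order all_algebra all_field.
Set Implicit Arguments. Unset Strict Implicit. Unset Printing Implicit Defensive.
Import GRing.Theory.
Local Open Scope ring_scope.

(* A = k[X]/(f) is modelled as MathComp's {poly %/ h}, the quotient by the
   MONIC associate h of f (same ideal (f) = (h) since k is a field).        *)
Definition monicize (k : fieldType) (f : {poly k}) : {poly k} :=
  (lead_coef f)^-1 *: f.

(* A_{k'} = A (x)_k k' = k'[X]/(f), for an embedding iota : k -> k'. *)
Notation Aext iota f := {poly %/ map_poly iota (monicize f)}.

Definition base_change (k K : fieldType) (iota : {rmorphism k -> K})
    (f : {poly k}) (a : {poly %/ monicize f}) : Aext iota f :=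
  in_qpoly (map_poly iota (monicize f)) (map_poly iota (a : {poly k})).

Definition phi (K : fieldType) (h : {poly K}) (theta : K) (a : {poly %/ h}) : K :=
  (a : {poly K}).[theta].

Definition is_mu (K : fieldType) (h : {poly K}) (omega : K) (mu : {poly %/ h}) :=
  forall theta, root h theta -> phi theta mu = if theta == omega then -1 else 1.

(* Points and lines of P(A_{k'}) are 1- and 2-dimensional k'-subspaces. *)
Definition lineL (K : fieldType) (h : {poly K}) (eps : {poly %/ h}) :
    {vspace {poly %/ h}} :=
  << [:: (eps^-1 * 'qX)%R; (eps^-1)%R] >>%VS.

Definition pointP (K : fieldType) (h : {poly K}) (eps : {poly %/ h}) (omega : K) :
    {vspace {poly %/ h}} :=
  <[ (eps^-1 * ('qX - omega%:A))%R ]>%VS.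

Definition pmul (K : fieldType) (h : {poly K}) (mu : {poly %/ h})
    (U : {vspace {poly %/ h}}) : {vspace {poly %/ h}} :=
  << [seq (mu * v)%R | v <- vbasis U] >>%VS.

(* Main.v *)
Require Import Defs.
From mathcomp Require Import all_boot all_order all_algebra all_field.
From mathcomp Require Import ring.
From Stdlib Require Import Classical.
Import GRing.Theory.
Local Open Scope ring_scope.
Set Implicit Arguments. Unset Strict Implicit.

Lemma phi_in (K : fieldType) (h : {poly K}) th p :
  root (mk_monic h) th -> phi th (in_qpoly h p) = p.[th].
Proof.
move=> /eqP r0; rewrite /phi /=.
have := Pdiv.RingMonic.rdivp_eq (monic_mk_monic h) p.
move=> E; rewrite [in RHS]E hornerD hornerM r0 mulr0 add0r //.
Qed.

Lemma phiM (K : fieldType) (h : {poly K}) th (a b : {poly %/ h}) :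
  root (mk_monic h) th -> phi th (a * b) = phi th a * phi th b.
Proof.
move=> r; by rewrite -hornerM -(@phi_in K h).
Qed.

Lemma phiD (K : fieldType) (h : {poly K}) th (a b : {poly %/ h}) :
  phi th (a + b) = phi th a + phi th b.
Proof. by rewrite /phi /= hornerD. Qed.

Lemma phiZ (K : fieldType) (h : {poly K}) th c (a : {poly %/ h}) :
  phi th (c *: a) = c * phi th a.
Proof. by rewrite /phi /= hornerZ. Qed.

Lemma phi1 (K : fieldType) (h : {poly K}) th : phi th (1 : {poly %/ h}) = 1.
Proof. by rewrite /phi /= hornerC. Qed.

Lemma phi0 (K : fieldType) (h : {poly K}) th : phi th (0 : {poly %/ h}) = 0.
Proof. by rewrite /phi /= horner0. Qed.

Lemma phiX (K : fieldType) (h : {poly K}) th :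
  root (mk_monic h) th -> phi th ('qX : {poly %/ h}) = th.
Proof. by move=> r; rewrite phi_in // hornerX. Qed.

Lemma phiN (K : fieldType) (h : {poly K}) th (a : {poly %/ h}) :
  phi th (- a) = - phi th a.
Proof. by rewrite /phi /= hornerN. Qed.

Lemma phiB (K : fieldType) (h : {poly K}) th (a b : {poly %/ h}) :
  phi th (a - b) = phi th a - phi th b.
Proof. by rewrite phiD phiN. Qed.

Lemma phiA (K : fieldType) (h : {poly K}) th c :
  phi th (c%:A : {poly %/ h}) = c.
Proof. by rewrite phiZ phi1 mulr1. Qed.

Definition good (K : fieldType) (h : {poly K}) (rs : seq K) :=
  mk_monic h = \prod_(r <- rs) ('X - r%:P) /\ uniq rs /\ size rs = 6%N.

Lemma good_root (K : fieldType) (h : {poly K}) rs th :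
  good h rs -> root (mk_monic h) th = (th \in rs).
Proof. by case=> -> _; rewrite root_prod_XsubC. Qed.

Lemma phi_inj (K : fieldType) (h : {poly K}) rs (a b : {poly %/ h}) :
  good h rs -> (forall th, root (mk_monic h) th -> phi th a = phi th b) -> a = b.
Proof.
move=> g E; apply/eqP; rewrite -subr_eq0; apply/eqP.
set c := a - b.
have Ec : forall th, th \in rs -> phi th c = 0.
  by move=> th; rewrite -(good_root _ g) => r; rewrite phiB E // subrr.
have ur : uniq_roots rs by rewrite uniq_rootsE; case: g => _ [].
have ar : all (root (c : {poly K})) rs by apply/allP => x hx; apply/eqP; exact: Ec.
have [q Hq] := uniq_roots_prod_XsubC ar ur.
apply: val_inj => /=.
apply/eqP; apply: contraLR (size_mk_monic c) => cn0.
rewrite -leqNgt; case: g => hE _.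
have d : \prod_(r <- rs) ('X - r%:P) %| (c : {poly K}) by rewrite Hq dvdp_mull.
rewrite -hE in d; exact: dvdp_leq cn0 d.
Qed.

Lemma coprime_prodX (K : fieldType) (p : {poly K}) rs :
  (forall r, r \in rs -> ~~ root p r) -> coprimep p (\prod_(r <- rs) ('X - r%:P)).
Proof.
elim: rs => [|r rs IH] H; first by rewrite big_nil coprimep1.
rewrite big_cons coprimepMr coprimep_XsubC H ?mem_head //=.
by apply: IH => x hx; apply: H; rewrite inE hx orbT.
Qed.

Lemma unit_ptwise (K : fieldType) (h : {poly K}) rs (a : {poly %/ h}) :
  good h rs -> (forall th, root (mk_monic h) th -> phi th a != 0) -> a \is a GRing.unit.
Proof.
move=> g H.
have cp : coprimep (mk_monic h) a.
  have [hE _] := g.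
  have cp : coprimep (\prod_(r <- rs) ('X - r%:P)) (a : {poly K}).
    rewrite coprimep_sym; apply: coprime_prodX => r hr.
    have := H r; rewrite (good_root _ g) hr /phi => /(_ isT); by rewrite /root.
  by rewrite -hE in cp.
apply/unitrP; exists (qpoly_inv a); split; first exact: qpoly_mulVz.
exact: qpoly_mulzV.
Qed.

Lemma phiV (K : fieldType) (h : {poly K}) th (a : {poly %/ h}) :
  root (mk_monic h) th -> a \is a GRing.unit -> phi th a^-1 = (phi th a)^-1.
Proof.
move=> r u.
have E : phi th a^-1 * phi th a = 1 by rewrite -phiM // mulVr // phi1.
have an0 : phi th a != 0 by apply/eqP => a0; move: E; rewrite a0 mulr0 => /eqP; rewrite eq_sym oner_eq0.
by apply: (mulIf an0); rewrite E mulVf.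
Qed.

Lemma mul_span (K : fieldType) (h : {poly K}) (mu : {poly %/ h}) (X : seq {poly %/ h}) v :
  v \in <<X>>%VS -> mu * v \in <<[seq (mu * x)%R | x <- X]>>%VS.
Proof.
move=> /(coord_span (X := in_tuple X)) ->.
rewrite mulr_sumr; apply: memv_suml => i _.
rewrite -scalerAr; apply: memvZ; apply: memv_span.
by apply: map_f; apply: mem_nth; exact: ltn_ord.
Qed.

Lemma mem_pmul (K : fieldType) (h : {poly K}) (mu : {poly %/ h}) (U : {vspace {poly %/ h}}) v :
  v \in U -> mu * v \in pmul mu U.
Proof.
by rewrite -{1}(span_basis (vbasisP U)) => /(mul_span mu).
Qed.

Lemma pmul_span (K : fieldType) (h : {poly K}) (mu : {poly %/ h}) (X : seq {poly %/ h}) :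
  pmul mu <<X>>%VS = <<[seq (mu * x)%R | x <- X]>>%VS.
Proof.
apply/eqP; rewrite eqEsubv; apply/andP; split.
  apply/span_subvP => w /mapP [b hb ->]; apply: mul_span; exact: vbasis_mem hb.
apply/span_subvP => w /mapP [b hb ->]; apply: mem_pmul; exact: memv_span.
Qed.

Lemma span2_neg (K : fieldType) (h : {poly K}) (a b : {poly %/ h}) :
  <<[:: - a; - b]>>%VS = <<[:: a; b]>>%VS.
Proof.
apply/eqP; rewrite eqEsubv; apply/andP; split; apply/span_subvP => w;
  rewrite !inE => /orP [] /eqP ->.
- by rewrite memvN memv_span // !inE eqxx.
- by rewrite memvN memv_span // !inE eqxx orbT.
- by rewrite -memvN memv_span // !inE eqxx.
- by rewrite -memvN memv_span // !inE eqxx orbT.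
Qed.

Lemma memL (K : fieldType) (h : {poly K}) (eps v : {poly %/ h}) :
  v \in lineL eps -> exists s t, v = s *: (eps^-1 * 'qX) + t *: eps^-1.
Proof.
rewrite /lineL span_cons span_seq1 => /memv_addP [u /vlineP [s ->] [w /vlineP [t ->] ->]].
by exists s, t.
Qed.

Lemma other_root (K : fieldType) (rs : seq K) w :
  uniq rs -> size rs = 6%N -> exists th, th \in rs /\ th != w.
Proof.
case: rs => [|a [|b rs]] //= /andP [hab _] _.
have [aw|aw] := eqVneq a w.
  exists b; split; first by rewrite !inE eqxx orbT.
  by rewrite -aw; apply: contraNneq hab => ->; rewrite mem_head.
by exists a; rewrite mem_head.
Qed.

Lemma fix_point (K : fieldType) (h : {poly K}) rs w (mu e : {poly %/ h}) :
  good h rs -> mk_monic h = h -> is_mu w mu ->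
  mu * (e * ('qX - w%:A)) = e * ('qX - w%:A).
Proof.
move=> g mkE Hmu; apply: (phi_inj g) => th r.
rewrite !phiM // phiB phiX // phiA.
have r' : root h th by rewrite -mkE.
rewrite (Hmu th r'); case: eqP => [->|_]; first by rewrite subrr !mulr0.
by rewrite mul1r.
Qed.

Lemma part_i (K : fieldType) (h : {poly K}) rs w (mu eps : {poly %/ h}) :
  good h rs -> mk_monic h = h -> is_mu w mu ->
  pmul mu (pointP eps w) = pointP eps w.
Proof.
move=> g mkE Hmu; rewrite /pointP -span_seq1 pmul_span /=.
by rewrite (fix_point _ g mkE Hmu).
Qed.

Lemma pointP_sub (K : fieldType) (h : {poly K}) w (eps : {poly %/ h}) :
  (pointP eps w <= lineL eps)%VS.
Proof.
rewrite /pointP -memvE mulrBr.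
have -> : eps^-1 * w%:A = w *: eps^-1 by rewrite -scalerAr mulr1.
apply: memvB; last apply: memvZ; apply: memv_span; rewrite !inE eqxx ?orbT //.
Qed.

Lemma pointv_nz (K : fieldType) (h : {poly K}) rs w (eps : {poly %/ h}) :
  good h rs -> eps \is a GRing.unit ->
  eps^-1 * ('qX - w%:A) != 0.
Proof.
move=> g u; have [_ [ur sz]] := g.
have [th [hth thw]] := other_root w ur sz.
have r : root (mk_monic h) th by rewrite (good_root _ g).
apply/eqP => /(congr1 (phi th)); rewrite phi0 phiM // phiB phiX // phiA phiV //.
move/eqP; rewrite mulf_eq0 invr_eq0 subr_eq0 (negbTE thw) orbF => /eqP e0.
have : phi th eps^-1 * phi th eps = 1 by rewrite -phiM // mulVr // phi1.
by rewrite phiV // e0 invr0 mul0r => /eqP; rewrite eq_sym oner_eq0.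
Qed.

Lemma inter_point (K : fieldType) (h : {poly K}) rs w (mu eps eps' : {poly %/ h}) :
  good h rs -> mk_monic h = h -> eps \is a GRing.unit -> is_mu w mu ->
  pmul mu (lineL eps) = lineL eps' -> lineL eps != lineL eps' ->
  (lineL eps :&: lineL eps')%VS = pointP eps w.
Proof.
move=> g mkE u Hmu H neq.
set I := (lineL eps :&: lineL eps')%VS.
have PI : (pointP eps w <= I)%VS.
  rewrite subv_cap pointP_sub /=.
  rewrite /pointP -memvE -H -(fix_point _ g mkE Hmu); apply: mem_pmul.
  by rewrite memvE pointP_sub.
have dP : \dim (pointP eps w) = 1%N by rewrite /pointP dim_vline (pointv_nz _ g u).
have dI : (\dim I <= 1)%N.
  rewrite leqNgt; apply/negP => d2.
  have dL : forall e : {poly %/ h}, (\dim (lineL e) <= 2)%N.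
    by move=> e; rewrite /lineL (leq_trans (dim_span _)).
  have E1 : I == lineL eps by rewrite eqEdim capvSl (leq_trans (dL _) d2).
  have E2 : I == lineL eps' by rewrite eqEdim capvSr (leq_trans (dL _) d2).
  by move: neq; rewrite -(eqP E1) -(eqP E2) eqxx.
apply/eqP; rewrite eq_sym eqEdim PI dP //.
Qed.

Lemma mu_sq (K : fieldType) (h : {poly K}) rs w (mu : {poly %/ h}) :
  good h rs -> mk_monic h = h -> is_mu w mu -> mu * mu = 1.
Proof.
move=> g mkE Hmu; apply: (phi_inj g) => th r.
have r' : root h th by rewrite -mkE.
rewrite phiM // phi1 (Hmu th r'); case: eqP => _; rewrite ?mulrNN mulr1 //.
Qed.

Lemma pmul_back (K : fieldType) (h : {poly K}) (mu eps eps' : {poly %/ h}) :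
  mu * mu = 1 -> pmul mu (lineL eps) = lineL eps' -> pmul mu (lineL eps') = lineL eps.
Proof.
move=> m2 H; rewrite -H /lineL !pmul_span /= !mulrA m2 !mul1r //.
Qed.

Lemma lin2 (K : fieldType) (x1 x2 p q : K) :
  x1 != x2 -> p * x1 + q = 0 -> p * x2 + q = 0 -> p = 0 /\ q = 0.
Proof.
move=> ne e1 e2.
have : p * (x1 - x2) = 0.
  have -> : p * (x1 - x2) = (p * x1 + q) - (p * x2 + q) by ring.
  by rewrite e1 e2 subrr.
move/eqP; rewrite mulf_eq0 subr_eq0 (negbTE ne) orbF => /eqP p0.
by split=> //; move: e1; rewrite p0 mul0r add0r.
Qed.

Lemma main_fwd (K : fieldType) (h : {poly K}) rs (eps eps' : {poly %/ h}) :
  good h rs -> mk_monic h = h -> (2 : K) != 0 ->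
  eps \is a GRing.unit -> eps' \is a GRing.unit -> eps ^+ 2 = eps' ^+ 2 ->
  lineL eps != lineL eps' -> (lineL eps :&: lineL eps')%VS != 0%VS ->
  exists w (mu : {poly %/ h}),
    [/\ root h w, is_mu w mu & pmul mu (lineL eps) = lineL eps'].
Proof.
move=> g mkE two u u' sq neq nz.
set e := eps^-1; set e' := eps'^-1.
set nu := e' * eps.
have nuE : nu * e = e' by rewrite /nu /e mulrK.
have nu2 : nu * nu = 1.
  have -> : nu * nu = (e' * e') * (eps * eps) by rewrite /nu; ring.
  rewrite -[eps * eps]expr2 sq expr2.
  have -> : e' * e' * (eps' * eps') = (e' * eps') * (e' * eps') by ring.
  by rewrite /e' mulVr // mulr1.
clearbody nu.
have pm : forall th, root (mk_monic h) th -> phi th nu = 1 \/ phi th nu = -1.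
  move=> th r; have : phi th nu ^+ 2 == 1 by rewrite expr2 -phiM // nu2 phi1.
  by rewrite sqrf_eq1 => /orP [] /eqP; [left|right].
have ae : forall th, root (mk_monic h) th -> phi th e != 0.
  move=> th r; rewrite /e phiV // invr_eq0; apply/eqP => e0.
  have : phi th eps^-1 * phi th eps = 1 by rewrite -phiM // mulVr // phi1.
  by rewrite e0 mulr0 => /eqP; rewrite eq_sym oner_eq0.
have Lnu : pmul nu (lineL eps) = lineL eps'.
  by rewrite /lineL pmul_span /= mulrA -/e nuE.
have Lnnu : pmul (- nu) (lineL eps) = lineL eps'.
  by rewrite /lineL pmul_span /= !mulNr mulrA -/e nuE span2_neg.
have [v vI vn0] : exists2 v, v \in (lineL eps :&: lineL eps')%VS & v != 0.
  have : ~~ (lineL eps :&: lineL eps' <= 0)%VS by rewrite subv0.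
  by case/subvPn => v vI; rewrite memv0 => vn0; exists v.
move: vI; rewrite memv_cap => /andP [/memL [s [t vE]] /memL [s' [t' vE']]].
have ptw : forall th, root (mk_monic h) th ->
    phi th e * (s * th + t) = phi th e * (phi th nu * (s' * th + t')).
  move=> th r.
  have := congr1 (phi th) vE'; rewrite {1}vE.
  have pe' : phi th e' = phi th nu * phi th e by rewrite -phiM // nuE.
  rewrite -/e -/e' !phiD !phiZ !phiM // phiX // pe' => E.
  have -> : phi th e * (s * th + t) = s * (phi th e * th) + t * phi th e by ring.
  rewrite E; ring.
have pos : forall th, root (mk_monic h) th -> phi th nu = 1 ->
    (s - s') * th + (t - t') = 0.
  move=> th r n1; have := ptw th r; rewrite n1 mul1r => /(mulfI (ae th r)) E.
  have -> : (s - s') * th + (t - t') = (s * th + t) - (s' * th + t') by ring.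
  by rewrite E subrr.
have neg : forall th, root (mk_monic h) th -> phi th nu = -1 ->
    (s + s') * th + (t + t') = 0.
  move=> th r n1; have := ptw th r; rewrite n1 mulN1r => /(mulfI (ae th r)) E.
  have -> : (s + s') * th + (t + t') = (s * th + t) + (s' * th + t') by ring.
  by rewrite E addNr.
have eqL : forall c : K, (forall th, root (mk_monic h) th -> phi th nu = c) ->
    (c = 1 \/ c = -1) -> False.
  move=> c Hc [] c1.
    have nu1 : nu = 1 by apply: (phi_inj g) => th r; rewrite Hc // phi1.
    by move: neq; rewrite /lineL -/e' -nuE nu1 !mul1r eqxx.
  have nu1 : nu = -1 by apply: (phi_inj g) => th r; rewrite Hc // phiN phi1.
  by move: neq; rewrite /lineL -/e' -nuE nu1 !mulN1r mulNr span2_neg eqxx.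
pose P1 := exists w1 w2, [/\ root (mk_monic h) w1, root (mk_monic h) w2, w1 != w2,
    phi w1 nu = 1 & phi w2 nu = 1].
pose P2 := exists w1 w2, [/\ root (mk_monic h) w1, root (mk_monic h) w2, w1 != w2,
    phi w1 nu = -1 & phi w2 nu = -1].
case: (classic (P1 /\ P2)) => [[[w1 [w2 [r1 r2 w12 n1 n2]]] [w3 [w4 [r3 r4 w34 n3 n4]]]] | NP].
  have [a1 b1] := lin2 w12 (pos _ r1 n1) (pos _ r2 n2).
  have [a2 b2] := lin2 w34 (neg _ r3 n3) (neg _ r4 n4).
  have s0 : s = 0.
    have : 2 * s = (s - s') + (s + s') by ring.
    rewrite a1 a2 addr0 => /eqP; rewrite mulf_eq0 (negbTE two) /= => /eqP //.
  have t0 : t = 0.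
    have : 2 * t = (t - t') + (t + t') by ring.
    rewrite b1 b2 addr0 => /eqP; rewrite mulf_eq0 (negbTE two) /= => /eqP //.
  by move: vn0; rewrite vE s0 t0 !scale0r addr0 eqxx.
have [NP1 | NP2] := not_and_or _ _ NP.
  case: (classic (exists w, root (mk_monic h) w /\ phi w nu = 1)) => [[w [rw nw]] | NE].
    exists w, (- nu); split; first by rewrite -mkE.
      move=> th rth; have r : root (mk_monic h) th by rewrite mkE.
      rewrite phiN; case: eqP => [->|ne]; first by rewrite nw.
      case: (pm th r) => nt; last by rewrite nt opprK.
      exfalso; apply: NP1; exists w, th; split => //.
      by apply/eqP => E; apply: ne; rewrite E.
    exact: Lnnu.
  exfalso; apply: (eqL (-1)); last by right.
  move=> th r; case: (pm th r) => // nt; exfalso; apply: NE; by exists th.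
case: (classic (exists w, root (mk_monic h) w /\ phi w nu = -1)) => [[w [rw nw]] | NE].
  exists w, nu; split; first by rewrite -mkE.
    move=> th rth; have r : root (mk_monic h) th by rewrite mkE.
    case: eqP => [->|ne]; first by rewrite nw.
    case: (pm th r) => nt; first by rewrite nt.
    exfalso; apply: NP2; exists w, th; split => //.
    by apply/eqP => E; apply: ne; rewrite E.
  exact: Lnu.
exfalso; apply: (eqL 1); last by left.
move=> th r; case: (pm th r) => // nt; exfalso; apply: NE; by exists th.
Qed.

Theorem proposition2p13
  (k K : fieldType) (iota : {rmorphism k -> K}) (f : {poly k})
  (delta : {poly %/ monicize f}) :
  (2 \notin [pchar k])%N ->
  separable_poly f ->
  size f = 7%N ->
  delta \is a GRing.unit ->
  (* k' is algebraic over k (k' \subseteq \bar k) *)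
  (forall x : K, exists p : {poly k}, p != 0 /\ root (map_poly iota p) x) ->
  (* k' contains the splitting field l = k(Omega) *)
  (exists rs : seq K,
      map_poly iota (monicize f) = \prod_(r <- rs) ('X - r%:P)) ->
  let h := map_poly iota (monicize f) in
  let deltaK := base_change iota delta in
  (* (i) *)
  (forall (omega : K) (mu eps : Aext iota f),
      root h omega -> is_mu omega mu -> eps ^+ 2 = deltaK ->
      pmul mu (pointP eps omega) = pointP eps omega)
  /\
  (* (ii) *)
  (forall eps eps' : Aext iota f,
      eps ^+ 2 = deltaK -> eps' ^+ 2 = deltaK ->
      lineL eps != lineL eps' ->
      ((lineL eps :&: lineL eps')%VS != 0%VS <->
         exists (omega : K) (mu : Aext iota f),
           [/\ root h omega, is_mu omega mu & pmul mu (lineL eps) = lineL eps'])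
      /\
      (forall (omega : K) (mu : Aext iota f),
          root h omega -> is_mu omega mu -> pmul mu (lineL eps) = lineL eps' ->
          (lineL eps :&: lineL eps')%VS = pointP eps omega /\
          pointP eps omega = pointP eps' omega)).
Proof.
move=> p2 sepf szf du _ [rs hE] h deltaK.
have f0 : f != 0 by rewrite -size_poly_eq0 szf.
have lf0 : lead_coef f != 0 by rewrite lead_coef_eq0.
have hk1 : lead_coef (monicize f) = 1 by rewrite /monicize lead_coefZ mulVf.
have szhk : size (monicize f) = 7%N by rewrite /monicize size_scale ?invr_eq0.
have szh : size h = 7%N by rewrite /h size_map_poly.
have hmon : h \is monic by rewrite /h hE monic_prod_XsubC.
have mkE : mk_monic h = h by rewrite /mk_monic szh hmon.
have szrs : size rs = 6%N by move: szh; rewrite /h hE size_prod_XsubC => [[]].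
have ur : uniq rs.
  rewrite -separable_prod_XsubC -hE separable_map /monicize.
  by rewrite (eqp_separable (eqp_scale _ _)) ?invr_eq0.
have g : good h rs by split; [rewrite mkE | split].
have two : (2 : K) != 0.
  move: p2; rewrite inE /= => p2.
  by rewrite -(rmorph_nat iota) fmorph_eq0.
have dnz : forall th, root (mk_monic h) th -> phi th deltaK != 0.
  move=> th r.
  have [y [yd _]] := unitrP du.
  have mkhk : mk_monic (monicize f) = monicize f.
    have mhk : monicize f \is monic by apply/monicP.
    by rewrite /mk_monic szhk mhk.
  have E := Pdiv.RingMonic.rdivp_eq (monic_mk_monic (monicize f)) ((y : {poly k}) * delta).
  have E2 : Pdiv.Ring.rmodp ((y : {poly k}) * delta) (mk_monic (monicize f)) = 1.
    by have := congr1 val yd; rewrite /= => ->; rewrite polyC1.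
  rewrite E2 in E.
  have E3 := congr1 (fun p => (map_poly iota p).[th]) E.
  move: E3 => /=; rewrite rmorphD rmorphM rmorph1 /= hornerD hornerM hornerC.
  have rh : root h th by rewrite -mkE.
  rewrite rmorphM /= hornerM.
  have -> : (map_poly iota (mk_monic (monicize f))).[th] = 0 by rewrite mkhk; exact/eqP.
  rewrite mulr0 add0r.
  rewrite /deltaK /base_change phi_in //.
  by move=> E4; apply/eqP => d0; move: E4; rewrite d0 mulr0 => /eqP; rewrite eq_sym oner_eq0.
have unit_sq : forall eps : Aext iota f, eps ^+ 2 = deltaK -> eps \is a GRing.unit.
  move=> eps sq; apply: (unit_ptwise g) => th r.
  apply/eqP => e0; move: (dnz th r); rewrite -sq expr2 phiM // e0 mul0r eqxx.
  by [].
split.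
  by move=> w mu eps rw Hmu _; exact: (part_i _ g mkE Hmu).
move=> eps eps' s1 s2 neq.
have u := unit_sq _ s1; have u' := unit_sq _ s2.
have sq : eps ^+ 2 = eps' ^+ 2 by rewrite s1 s2.
have back : forall w (mu : Aext iota f), root h w -> is_mu w mu ->
    pmul mu (lineL eps) = lineL eps' ->
    (lineL eps :&: lineL eps')%VS = pointP eps w /\ pointP eps w = pointP eps' w.
  move=> w mu rw Hmu H.
  have I1 := inter_point g mkE u Hmu H neq.
  have H' := pmul_back (mu_sq g mkE Hmu) H.
  have neq' : lineL eps' != lineL eps by rewrite eq_sym.
  have I2 := inter_point g mkE u' Hmu H' neq'.
  by split => //; rewrite -I1 -I2 capvC.
split => //; split.
  by move=> nz; exact: (main_fwd g mkE two u u' sq neq nz).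
move=> [w [mu [rw Hmu H]]]; have [I1 _] := back w mu rw Hmu H.
by rewrite I1 /pointP -dimv_eq0 dim_vline (pointv_nz _ g u).
Qed.
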